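(* Let $n\ge 4$ and $S=S_{1,n}$. If $P$ is a pants decomposition of $S$ whose adjacency graph $\mathcal{G}(P)$ contains no triangle (no $3$-cycle), then $P$ is either a linear pants decomposition or a cyclic pants decomposition.
   Context: $S_{1,n}$ is the connected orientable surface of genus $1$ with $n$ punctures. A pants decomposition is a maximal collection of pairwise disjoint, pairwise non-isotopic essential simple closed curves; its pairs of pants are the closures of the components of $S-P$. Two curves of $P$ are adjacent with respect to $P$ if some component of $S-P$ contains both in its closure; the adjacency graph $\mathcal{G}(P)$ has a vertex for each curve of $P$ and an edge for each adjacent pair. A pants decomposition of $S_{1,n}$ is linear if its pairs of pants consist of one torus with one boundary component, $n-2$ once-punctured annuli, and one twice-punctured disk, glued in a chain: the torus with one boundary at one end, the twice-punctured disk at the other, and the once-punctured annuli in between (so the adjacency graph is a path, with exactly one nonseparating curve at one end). It is cyclic if its pairs of pants are $n$ once-punctured annuli glued end to end in a cycle (so all its curves are nonseparating and the adjacency graph is an $n$-cycle). *)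

(* Defs.v *)
From mathcomp Require Import all_boot.
Set Implicit Arguments. Unset Strict Implicit. Unset Printing Implicit Defensive.

(* A pants decomposition of S_{1,n}, described (up to homeomorphism) by its
   gluing data: a finite type [C] of curves, a finite type [Pn] of pairs of
   pants, and for each pair of pants its three boundary slots, each of which is
   either a curve of P ([inl c]) or one of the n punctures ([inr k]).
   - every curve bounds exactly two slots (it is glued from two sides; both
     slots may belong to the same pair of pants),
   - every puncture is exactly one slot,
   - the surface is connected (the dual graph of pants is connected),
   - Euler characteristic: chi(S_{1,n}) = -n = -#|Pn| (genus 1). *)
Record pants_decomposition (n : nat) (C Pn : finType) := PantsDecomposition {
  bd : Pn -> 3.-tuple (C + 'I_n)%type ;
  curve_two_sides : forall c : C,
    #|[set x : Pn * 'I_3 | tnth (bd x.1) x.2 == inl c]| = 2 ;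
  puncture_once : forall k : 'I_n,
    #|[set x : Pn * 'I_3 | tnth (bd x.1) x.2 == inr k]| = 1 ;
  surface_connected : forall p q : Pn,
    connect (fun p1 p2 : Pn => [exists c : C, (inl c \in bd p1) && (inl c \in bd p2)]) p q ;
  euler_char : #|Pn| = n
}.

Section Defs.
Variables (n : nat) (C Pn : finType) (P : pants_decomposition n C Pn).

Definition on_pants (p : Pn) (c : C) : bool := inl c \in bd P p.

Definition adjacent (c d : C) : bool := (c != d) && [exists p, on_pants p c && on_pants p d].

Definition triangle_free : Prop :=
  forall c d e : C, ~ [/\ adjacent c d, adjacent d e & adjacent e c].

Definition slots (p : Pn) : seq (C + 'I_n)%type := bd P p.

(* linear: curves c_0..c_{n-1}, pants p_0..p_{n-1} (both enumerations bijective)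
   with p_0 the one-holed torus cut along c_0 with boundary c_1,
   p_i (1 <= i <= n-2) a once-punctured annulus between c_i and c_{i+1},
   p_{n-1} a twice-punctured disk bounded by c_{n-1}. *)
Definition linear : Prop :=
  exists (f : nat -> C) (g : nat -> Pn),
    [/\ forall c, exists2 i, i < n & f i = c,
        forall i j, i < n -> j < n -> f i = f j -> i = j,
        forall p, exists2 i, i < n & g i = p &
        forall i j, i < n -> j < n -> g i = g j -> i = j] /\
    [/\ perm_eq (slots (g 0)) [:: inl (f 0); inl (f 0); inl (f 1)],
        forall i, 1 <= i -> i <= n - 2 ->
          exists k, perm_eq (slots (g i)) [:: inl (f i); inl (f i.+1); inr k]
      & exists k k', perm_eq (slots (g (n - 1))) [:: inl (f (n - 1)); inr k; inr k']].

(* cyclic: n once-punctured annuli p_i between c_i and c_{i+1 mod n}. *)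
Definition cyclic : Prop :=
  exists (f : nat -> C) (g : nat -> Pn),
    [/\ forall c, exists2 i, i < n & f i = c,
        forall i j, i < n -> j < n -> f i = f j -> i = j,
        forall p, exists2 i, i < n & g i = p,
        forall i j, i < n -> j < n -> g i = g j -> i = j
      & forall i, i < n ->
          exists k, perm_eq (slots (g i)) [:: inl (f i); inl (f (i.+1 %% n)); inr k]].

End Defs.

(* Main.v *)
Require Import Defs.
From mathcomp Require Import all_boot zify.
Set Implicit Arguments. Unset Strict Implicit. Unset Printing Implicit Defensive.


Lemma inj_surj_card (T : finType) (h : nat -> T) j :
  (forall i1 i2, i1 < j -> i2 < j -> h i1 = h i2 -> i1 = i2) ->
  (forall q, exists2 i, i < j & h i = q) -> #|T| = j.
Proof.
move=> hi hs; pose h' (i : 'I_j) := h i.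
have ih' : injective h' by move=> x y /hi e; apply/val_inj/e.
have := leq_card h' ih'; rewrite card_ord => l1.
apply/eqP; rewrite eqn_leq l1 andbT.
have l2 : #|T| <= #|codom h'|.
  apply: subset_leq_card; apply/subsetP => q _; have [i hij <-] := hs q.
  exact: (codom_f h' (Ordinal hij)).
by rewrite (card_codom ih') card_ord in l2.
Qed.

Lemma surj_inj (T : finType) (h : nat -> T) j :
  (forall q, exists2 i, i < j & h i = q) -> #|T| = j ->
  forall i1 i2, i1 < j -> i2 < j -> h i1 = h i2 -> i1 = i2.
Proof.
move=> hs hc i1 i2 l1 l2 e; pose h' (i : 'I_j) := h i.
have e1 : #|codom h'| = #|'I_j|.
  have l3 : #|T| <= #|codom h'|.
    apply: subset_leq_card; apply/subsetP => q _; have [i hij <-] := hs q.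
    exact: (codom_f h' (Ordinal hij)).
  have l4 := max_card (mem (codom h')).
  rewrite card_ord; apply/eqP; rewrite eqn_leq; apply/andP; split; by move: l3 l4; rewrite hc.
have /image_injP inj : #|image h' 'I_j| == #|'I_j| by rewrite -e1.
have := inj (Ordinal l1) (Ordinal l2) isT isT e.
by case.
Qed.

Lemma pigeon (T : finType) (h : nat -> T) : exists j i, [/\ i < j, j <= #|T| & h i = h j].
Proof.
pose h' (i : 'I_#|T|.+1) := h i.
have : ~~ injectiveb h'.
  by apply/negP => /injectiveP ih; have := leq_card h' ih; rewrite card_ord ltnn.
case/injectivePn => x [y xy e].
case: (ltngtP x y) => [lt|gt|eq].
- by exists y, x; split => //; rewrite -ltnS.
- by exists x, y; split => //; rewrite -ltnS.
- by move: xy; rewrite (val_inj eq) eqxx.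
Qed.

Section S.
Variables (n : nat) (C Pn : finType) (P : pants_decomposition n C Pn).

Lemma card_slots v : #|[set x : Pn * 'I_3 | tnth (bd P x.1) x.2 == v]| = \sum_p count_mem v (slots P p).
Proof.
rewrite -sum1dep_card big_mkcond /= -(pair_bigA _ (fun p (i : 'I_3) => if tnth (bd P p) i == v then 1 else 0)) /=.
apply: eq_bigr => p _; rewrite /slots.
case: (bd P p) => [[|a [|b [|c [|]]]] //] Hs.
by rewrite !big_ord_recl big_ord0 /= /tnth /=; case: (a == v); case: (b == v); case: (c == v).
Qed.

Definition isl (v : C + 'I_n) : bool := if v is inl _ then true else false.

Lemma sum_eq1 (T : finType) (a : T) : \sum_(c : T) (a == c : nat) = 1.
Proof. by rewrite (bigD1 a) //= eqxx big1 // => c /negbTE; rewrite eq_sym => ->. Qed.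

Lemma sum_inl (s : seq (C + 'I_n)) : \sum_c count_mem (inl c) s = count isl s.
Proof.
elim: s => [|v s IH] /=; first by rewrite big1.
rewrite big_split /= IH; congr (_ + _).
case: v => [a|k] /=; [exact: (sum_eq1 a) | by rewrite big1].
Qed.

Lemma sum_inr (s : seq (C + 'I_n)) : \sum_k count_mem (inr k) s = count (predC isl) s.
Proof.
elim: s => [|v s IH] /=; first by rewrite big1.
rewrite big_split /= IH; congr (_ + _).
case: v => [a|k] /=; [by rewrite big1 | exact: (sum_eq1 k)].
Qed.

Lemma cnt_c c : \sum_p count_mem (inl c) (slots P p) = 2.
Proof. by rewrite -card_slots curve_two_sides. Qed.
Lemma cnt_k k : \sum_p count_mem (inr k) (slots P p) = 1.
Proof. by rewrite -card_slots puncture_once. Qed.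

Definition deg p := count isl (slots P p).

Lemma sum_deg : \sum_p deg p = 2 * n /\ #|C| = n.
Proof.
have h1 : \sum_p deg p = 2 * #|C|.
  rewrite /deg; under eq_bigr do rewrite -sum_inl.
  rewrite exchange_big /=; under eq_bigr do rewrite cnt_c.
  by rewrite sum_nat_const muln2 mul2n.
have h2 : \sum_p count (predC isl) (slots P p) = n.
  under eq_bigr do rewrite -sum_inr.
  rewrite exchange_big /=; under eq_bigr do rewrite cnt_k.
  by rewrite sum_nat_const card_ord muln1.
have h3 : \sum_p (deg p + count (predC isl) (slots P p)) = 3 * n.
  under eq_bigr do rewrite count_predC size_tuple.
  by rewrite sum_nat_const (euler_char P) mulnC.
rewrite big_split /= h1 h2 in h3.
have hc : #|C| = n by lia.
by rewrite h1 hc.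
Qed.

Definition cnt p c := count_mem (inl c) (slots P p).
Lemma cnt_c1 c : \sum_p cnt p c = 2.
Proof. exact: cnt_c. Qed.

Lemma on_slots p c : on_pants P p c = (inl c \in slots P p).
Proof. by []. Qed.

Lemma on_cnt p c : on_pants P p c = (0 < cnt p c).
Proof. by rewrite on_slots -has_pred1 has_count. Qed.

Lemma cnt_le2 p c : cnt p c <= 2.
Proof. by rewrite -(cnt_c1 c) (bigD1 p) //= leq_addr. Qed.

Lemma sum2 p q c : p != q -> cnt p c + cnt q c <= 2.
Proof.
move=> pq; rewrite -(cnt_c1 c) (bigD1 p) //= leq_add2l (bigD1 q) /=; last by rewrite eq_sym.
exact: leq_addr.
Qed.

Lemma sum3 p q r c : p != q -> p != r -> q != r -> cnt p c + cnt q c + cnt r c <= 2.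
Proof.
move=> pq pr qr; rewrite -(cnt_c1 c) (bigD1 p) //= -addnA leq_add2l (bigD1 q) /=; last by rewrite eq_sym.
rewrite leq_add2l (bigD1 r) /=; last by rewrite eq_sym pr eq_sym qr.
exact: leq_addr.
Qed.

Lemma only2 p c r : cnt p c = 2 -> on_pants P r c -> r = p.
Proof.
move=> h; rewrite on_cnt => hr; apply/eqP; apply: contraTT hr => rp.
have := sum2 c rp; rewrite -eqn0Ngt; move=> H; apply/eqP; lia.
Qed.

Lemma two_pants p q r c : p != q -> on_pants P p c -> on_pants P q c -> on_pants P r c -> r = p \/ r = q.
Proof.
rewrite !on_cnt => pq hp hq hr.
case: (eqVneq p r) => [->|rp]; first by left.
case: (eqVneq q r) => [->|rq]; first by right.
exfalso; have := sum3 c pq rp rq; lia.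
Qed.

Lemma exists_other p c : cnt p c = 1 -> exists q, q != p /\ on_pants P q c.
Proof.
move=> h; case: (pickP [pred q | (q != p) && on_pants P q c]) => [q /andP[]|H]; first by exists q.
have := cnt_c1 c; rewrite (bigD1 p) //= h big1 // => q qp.
by move: (H q) => /=; rewrite qp on_cnt /=; case: (cnt q c).
Qed.

Lemma exists_on c : exists p, on_pants P p c.
Proof.
case: (pickP [pred q | on_pants P q c]) => [q h|H]; first by exists q.
have := cnt_c1 c; rewrite big1 // => q _.
by move: (H q) => /=; rewrite on_cnt; case: (cnt q c).
Qed.

Lemma closure (S : pred Pn) p0 : S p0 ->
  (forall p q c, S p -> on_pants P p c -> on_pants P q c -> S q) -> forall q, S q.
Proof.
move=> Sp0 HS q; have /connectP[s] := surface_connected P p0 q.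
elim: s p0 Sp0 => [|x s IH] p0 Sp0 /=; first by move=> _ ->.
move=> /andP[/existsP[c /andP[h1 h2]] hp] hq; apply: (IH x) => //; exact: HS h1 h2.
Qed.


Lemma eq_ll (a b : C) : (inl a == inl b :> C + 'I_n) = (a == b). Proof. by []. Qed.
Lemma eq_lr (a : C) k : (inl a == inr k :> C + 'I_n) = false. Proof. by []. Qed.
Lemma eq_rl (a : C) k : (inr k == inl a :> C + 'I_n) = false. Proof. by []. Qed.
Definition eqsimp := (eq_ll, eq_lr, eq_rl).

Lemma cnt_perm p c L : perm_eq (slots P p) L -> cnt p c = count_mem (inl c) L.
Proof. by rewrite /cnt => /permP ->. Qed.
Lemma on_perm p c L : perm_eq (slots P p) L -> on_pants P p c = (inl c \in L).
Proof. by move/perm_mem => h; rewrite on_slots h. Qed.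

Lemma other_pants (hn : 2 <= n) p : exists q : Pn, q != p.
Proof.
have : 0 < #|@predC1 Pn p| by rewrite cardC1 (euler_char P); move: hn; case: (n) => [|[|]].
by case/card_gt0P => q; rewrite inE => h; exists q.
Qed.

Lemma noniso (hn : 2 <= n) p : ~ (forall c, on_pants P p c -> cnt p c = 2).
Proof.
move=> H; have [q qp] := other_pants hn p.
suff: q == p by rewrite (negbTE qp).
apply: (@closure (pred1 p) p (eqxx p)) => p' q' c /eqP -> hc hq.
by apply/eqP; apply: only2 hq; apply: H.
Qed.

Definition typeA p := exists c d, c != d /\ perm_eq (slots P p) [:: inl c; inl c; inl d].
Definition typeB p := exists c d k, c != d /\ perm_eq (slots P p) [:: inl c; inl d; inr k].
Definition typeD p := exists c k k', perm_eq (slots P p) [:: inl c; inr k; inr k'].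

Lemma classify (hn : 2 <= n) (tf : triangle_free P) p : [\/ typeA p, typeB p | typeD p].
Proof.
have NI := noniso hn (p:=p).
have [x [y [z Hs]]] : exists x y z, slots P p = [:: x; y; z].
  by rewrite /slots; case: (bd P p) => [[|x [|y [|z [|]]]] //] ?; exists x, y, z.
have pr : forall L, perm_eq [:: x; y; z] L -> perm_eq (slots P p) L by move=> L; rewrite Hs.
have onp : forall c, on_pants P p c = (inl c \in [:: x; y; z]) by move=> c; rewrite on_slots Hs.
have cp : forall c, cnt p c = count_mem (inl c) [:: x; y; z] by move=> c; rewrite /cnt Hs.
case: x {Hs} pr onp cp => [a|k1]; case: y => [b|k2]; case: z => [c|k3] pr onp cp.
- case: (eqVneq a b) => [eab|ab].
    subst b; case: (eqVneq a c) => [eac|ac].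
      by subst c; have := cnt_le2 p a; rewrite cp /= !eq_ll eqxx.
    by constructor 1; exists a, c; split => //; apply: pr.
  case: (eqVneq a c) => [eac|ac].
    by subst c; constructor 1; exists a, b; split => //; apply: pr; apply/permP => q /=; lia.
  case: (eqVneq b c) => [ebc|bc].
    by subst c; constructor 1; exists b, a; split; [rewrite eq_sym | apply: pr; apply/permP => q /=; lia].
  exfalso; apply: (tf a b c); split; rewrite /adjacent ?ab ?bc 1?eq_sym ?ac /=; apply/existsP; exists p;
    by rewrite !onp !inE !eqsimp !eqxx ?orbT.
- case: (eqVneq a b) => [eab|ab].
    subst b; exfalso; apply: NI => d; rewrite onp cp !inE !eqsimp /= => h.
    have e : d = a by apply/eqP; move: h; case: (d == a).
    by subst d; rewrite !eqxx.
  by constructor 2; exists a, b, k3; split => //; apply: pr.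
- case: (eqVneq a c) => [eac|ac].
    subst c; exfalso; apply: NI => d; rewrite onp cp !inE !eqsimp /= => h.
    have e : d = a by apply/eqP; move: h; case: (d == a).
    by subst d; rewrite !eqxx.
  by constructor 2; exists a, c, k2; split => //; apply: pr; apply/permP => q /=; lia.
- by constructor 3; exists a, k2, k3; apply: pr.
- case: (eqVneq b c) => [ebc|bc].
    subst c; exfalso; apply: NI => d; rewrite onp cp !inE !eqsimp /= => h.
    have e : d = b by apply/eqP; move: h; case: (d == b).
    by subst d; rewrite !eqxx.
  by constructor 2; exists b, c, k1; split => //; apply: pr; apply/permP => q /=; lia.
- by constructor 3; exists b, k1, k3; apply: pr; apply/permP => q /=; lia.
- by constructor 3; exists c, k1, k2; apply: pr; apply/permP => q /=; lia.
- by exfalso; apply: NI => d; rewrite onp !inE !eqsimp.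
Qed.


Definition oth p c := odflt c [pick d | (d != c) && on_pants P p d].
Definition opp p d := odflt p [pick q | (q != p) && on_pants P q d].
Definition step (s : Pn * C) := let d := oth s.1 s.2 in (opp s.1 d, d).

Variable s0 : Pn * C.
Definition st i := iter i step s0.
Definition g i := (st i).1.
Definition f i := (st i).2.

Definition Ent i := [exists d, exists x, [&& perm_eq (slots P (g i)) [:: inl (f i); inl d; x],
   d != f i & (x == inl (f i)) || ~~ isl x]].

Lemma entP i : Ent i -> exists d x, [/\ perm_eq (slots P (g i)) [:: inl (f i); inl d; x],
   d != f i & (x = inl (f i) \/ exists k, x = inr k)].
Proof.
case/existsP => d /existsP[x /and3P[h1 h2 h3]]; exists d, x; split => //.
by case: x h1 h3 => [a|k] _ /=; [rewrite orbF => /eqP ->; left | right; exists k].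
Qed.

Lemma ent_next i d x : perm_eq (slots P (g i)) [:: inl (f i); inl d; x] -> d != f i ->
  (x = inl (f i) \/ exists k, x = inr k) ->
  [/\ f i.+1 = d, cnt (g i) d = 1, g i.+1 != g i, on_pants P (g i.+1) d &
    [/\ cnt (g i.+1) d = 1, forall c, on_pants P (g i) c -> c = f i \/ c = d &
        forall r, on_pants P r d -> r = g i \/ r = g i.+1]].
Proof.
move=> hp hd hx.
have onL : forall c, on_pants P (g i) c -> c = f i \/ c = d.
  move=> c; rewrite (on_perm _ hp) !inE !eqsimp.
  case/orP => [/eqP->|/orP[/eqP->|]]; [by left | by right |].
  by case: hx => [->|[k ->]]; rewrite ?eqsimp // => /eqP ->; left.
have c1 : cnt (g i) d = 1.
  have fd' : (f i == d) = false by rewrite eq_sym (negbTE hd).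
  rewrite (cnt_perm _ hp) /= !eq_ll eqxx fd'.
  by case: hx => [->|[k ->]]; rewrite ?eqsimp ?fd'.
have fd : f i.+1 = d.
  rewrite /f /= /step /oth /=; case: pickP => [e /andP[h1 h2]|H] /=.
    by case: (onL e h2) h1 => [->|//]; rewrite eqxx.
  by have := H d; rewrite (on_perm _ hp) hd !inE eqxx orbT.
have [q0 [q0n q0o]] := exists_other c1.
have gd : g i.+1 != g i /\ on_pants P (g i.+1) d.
  have -> : g i.+1 = opp (g i) d by rewrite -fd.
  rewrite /opp; case: pickP => [q /andP[h1 h2]|H] //=.
  by have := H q0; rewrite q0n q0o.
case: gd => gn go; split => //; split.
- apply/eqP; rewrite eqn_leq; have := sum2 d gn; rewrite c1 addn1 ltnS => -> /=.
  by rewrite -on_cnt.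
- exact: onL.
- move=> r hr; apply: two_pants hr => //; first by rewrite eq_sym.
  by rewrite on_cnt c1.
Qed.


Lemma ent_facts i : Ent i ->
  [/\ forall c, on_pants P (g i) c -> c = f i \/ c = f i.+1, f i.+1 != f i, g i.+1 != g i,
      on_pants P (g i) (f i.+1) &
      [/\ on_pants P (g i.+1) (f i.+1), cnt (g i.+1) (f i.+1) = 1 &
          forall r, on_pants P r (f i.+1) -> r = g i \/ r = g i.+1]].
Proof.
case/entP => d [x [hp hd hx]]; have [fd c1 gn go [c2 onL pr]] := ent_next hp hd hx.
by rewrite fd; split => //; rewrite on_cnt c1.
Qed.

Lemma rep M : (forall i, i < M -> Ent i) -> forall i j, i < j -> j <= M -> g i = g j ->
   (forall j' i', j' < j -> i' < j' -> g i' != g j') -> i = 0 /\ f j = f 0.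
Proof.
move=> HE i j ij jM eij hmin.
case: j ij jM eij hmin => [//|j1] ij jM eij hmin.
have [_ _ gn1 on1 [on2 _ _]] := ent_facts (HE j1 jM).
have [onLi fn _ _ [_ _ prI]] := ent_facts (HE i (leq_trans ij jM)).
have : on_pants P (g i) (f j1.+1) by rewrite eij.
case/onLi => e.
- case: i ij eij e onLi fn prI => [|i1] ij eij e onLi fn prI; first by [].
  have [_ _ _ _ [_ _ prI1]] := ent_facts (HE i1 (leq_trans (ltnW ij) jM)).
  have : on_pants P (g j1) (f i1.+1) by rewrite -e.
  case/prI1 => h.
    by have := hmin j1 i1 (ltnSn j1) ij; rewrite h eqxx.
  by move: gn1; rewrite -eij h eqxx.
- have : on_pants P (g j1) (f i.+1) by rewrite -e.
  case/prI => h; first by move: gn1; rewrite -eij h eqxx.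
  case: (ltngtP i.+1 j1) => [lt|gt|eq].
  + by have := hmin j1 i.+1 (ltnSn j1) lt; rewrite h eqxx.
  + have ei : i = j1 by apply/eqP; rewrite eqn_leq -ltnS ij -ltnS gt.
    by move: gn1; rewrite -eij ei eqxx.
  + subst j1; have [_ fn2 _ _ _] := ent_facts (HE i.+1 jM).
    by move: fn2; rewrite e eqxx.
Qed.

Lemma min_rep2 j0 i0 : i0 < j0 -> g i0 = g j0 -> exists j i, [/\ i < j, j <= j0, g i = g j &
   forall j' i', j' < j -> i' < j' -> g i' != g j'].
Proof.
move=> l0 e0.
have ex : exists j, [exists i : 'I_j, g i == g j].
  by exists j0; apply/existsP; exists (Ordinal l0); rewrite /= e0.
have [j /existsP[i /eqP ei] minj] := find_ex_minn ex.
exists j, i; split => //.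
- apply: minj.
  by apply/existsP; exists (Ordinal l0); rewrite /= e0.
- move=> j' i' jj ij; apply/negP => /eqP e.
  suff : j <= j' by rewrite leqNgt jj.
  by apply: minj; apply/existsP; exists (Ordinal ij); rewrite /= e.
Qed.

Lemma min_rep : exists j i, [/\ i < j, j <= #|Pn|, g i = g j &
   forall j' i', j' < j -> i' < j' -> g i' != g j'].
Proof.
have [j0 [i0 [l0 l1 e0]]] := pigeon g.
have [j [i [h1 h2 h3 h4]]] := min_rep2 l0 e0.
by exists j, i; split => //; apply: leq_trans l1.
Qed.

Lemma from_B p c : typeB p -> on_pants P p c ->
  exists d k, perm_eq (slots P p) [:: inl c; inl d; inr k] /\ d != c.
Proof.
case=> a [b [k [ab hp]]]; rewrite (on_perm _ hp) !inE !eqsimp /= => /orP[/eqP->|/orP[/eqP->|//]].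
  by exists b, k; rewrite eq_sym.
exists a, k; split => //; apply: perm_trans hp _; apply/permP => q /=; lia.
Qed.

Lemma EntB i d k : perm_eq (slots P (g i)) [:: inl (f i); inl d; inr k] -> d != f i -> Ent i.
Proof.
by move=> hp hd; apply/existsP; exists d; apply/existsP; exists (inr k); rewrite hp hd /= ?orbT.
Qed.

Lemma inS j k q : k < j -> g k = q -> [exists i : 'I_j, g i == q].
Proof. by move=> hk e; apply/existsP; exists (Ordinal hk); rewrite /= e. Qed.

Lemma closure2 j : 0 < j -> (forall p q c, [exists i : 'I_j, g i == p] -> on_pants P p c -> on_pants P q c ->
  [exists i : 'I_j, g i == q]) -> forall q, exists2 i, i < j & g i = q.
Proof.
move=> j0 HS q; have := @closure [pred q | [exists i : 'I_j, g i == q]] (g 0) (inS j0 erefl) HS q.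
by case/existsP => i /eqP <-; exists i.
Qed.

Lemma cyc_case : 4 <= n -> (forall p, typeB p) -> on_pants P (g 0) (f 0) -> cyclic P.
Proof.
move=> hn allB on0.
have EB : forall i, exists d k, perm_eq (slots P (g i)) [:: inl (f i); inl d; inr k] /\ d != f i.
  elim => [|i [d [k [hp hd]]]]; first exact: from_B (allB _) on0.
  have [fd c1 gn go _] := ent_next hp hd (or_intror (ex_intro _ k erefl)).
  by apply: from_B (allB _) _; rewrite fd.
have E : forall i, Ent i by move=> i; have [d [k [hp hd]]] := EB i; exact: EntB hp hd.
have [j [i [ij jle eij hmin]]] := min_rep.
have [i0 fj] := rep (M := j) (fun i _ => E i) ij (leqnn j) eij hmin; subst i.
have surjg : forall q, exists2 i, i < j & g i = q.
  move=> q0; apply: (closure2 ij) => p q c /existsP[[i hi] /= /eqP <-] hc hq.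
  have [onL _ _ _ [_ _ pr]] := ent_facts (E i).
  case/onL: hc => ec; subst c.
  - case: i hi onL pr hq => [|i1] hi onL pr hq.
      case: j ij jle eij hmin fj hi => [//|j1] ij jle eij hmin fj hi.
      have [_ _ _ _ [_ _ pr1]] := ent_facts (E j1).
      have hq' : on_pants P q (f j1.+1) by rewrite fj.
      by case: (pr1 q hq') => ->; [apply: inS (ltnSn j1) _ | apply: inS ij _].
    have [_ _ _ _ [_ _ pr1]] := ent_facts (E i1).
    by case: (pr1 q hq) => ->; [apply: inS (ltnW hi) _ | apply: inS hi _].
  - case: (pr q hq) => ->; first exact: inS hi _.
    case: (ltngtP i.+1 j) => [lt|gt|eq]; first exact: inS lt _.
      by exfalso; lia.
    by apply: inS ij _; rewrite eq.
have injg : forall i1 i2, i1 < j -> i2 < j -> g i1 = g i2 -> i1 = i2.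
  move=> i1 i2 l1 l2 e; case: (ltngtP i1 i2) => [lt|gt|//].
    by have := hmin i2 i1 l2 lt; rewrite e eqxx.
  by have := hmin i1 i2 l1 gt; rewrite e eqxx.
have jn : j = n by rewrite -(euler_char P) (inj_surj_card injg surjg).
subst j.
have surjf : forall c, exists2 i, i < n & f i = c.
  move=> c; have [p hp] := exists_on c; have [i hi ep] := surjg p; subst p.
  have [onL _ _ _ _] := ent_facts (E i).
  case/onL: hp => ->; first by exists i.
  case: (ltngtP i.+1 n) => [lt|gt|eq]; first by exists i.+1.
    by exfalso; lia.
  by exists 0 => //; rewrite eq.
have [_ hC] := sum_deg.
have injf := surj_inj surjf hC.
exists f, g; split => // i hi.
have [d [k [hp hd]]] := EB i.
have [fd _ _ _ _] := ent_next hp hd (or_intror (ex_intro _ k erefl)).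
exists k; rewrite -fd in hp.
case: (ltngtP i.+1 n) => [lt|gt|eq]; first by rewrite modn_small.
  by exfalso; lia.
by rewrite eq modnn -fj; rewrite eq in hp.
Qed.


Lemma lin_case : 4 <= n -> triangle_free P -> forall c1, f 0 != c1 ->
  perm_eq (slots P (g 0)) [:: inl (f 0); inl (f 0); inl c1] -> linear P.
Proof.
move=> hn tf c1 c01 hA.
have hn2 : 2 <= n by lia.
have hA' : perm_eq (slots P (g 0)) [:: inl (f 0); inl c1; inl (f 0)].
  by apply: perm_trans hA _; apply/permP => q /=; lia.
have c10 : c1 != f 0 by rewrite eq_sym.
have E0 : Ent 0.
  apply/existsP; exists c1; apply/existsP; exists (inl (f 0)).
  by apply/and3P; split => //; rewrite eqxx.
have h10 : (c1 == f 0) = false by apply/negbTE.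
have c2 : cnt (g 0) (f 0) = 2 by rewrite (cnt_perm _ hA) /= !eq_ll eqxx h10.
have c0only : forall r, on_pants P r (f 0) -> r = g 0 := fun r h => only2 c2 h.
have noRep : forall M i j, (forall i, i < M -> Ent i) -> i < j -> j <= M -> g i = g j -> False.
  move=> M i j HE ij jM e; have [j' [i' [ij' jj' e' hmin]]] := min_rep2 ij e.
  have [i0 fj] := rep HE ij' (leq_trans jj' jM) e' hmin; subst i'.
  case: j' ij' jj' e' hmin fj => [//|j1] ij' jj' e' hmin fj.
  have l : j1 < M by lia.
  have [_ _ gn1 on1 _] := ent_facts (HE j1 l).
  rewrite fj in on1; have := c0only _ on1 => h.
  by move: gn1; rewrite -e' h eqxx.
have ex : exists m, ~~ Ent m.
  case: (boolP [forall i : 'I_#|Pn|.+1, Ent i]) => [H|].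
    exfalso; have [j [i [ij jle e _]]] := min_rep.
    by apply: (noRep #|Pn|.+1 i j _ ij (leqW jle) e) => k hk; exact: (forallP H (Ordinal hk)).
  by rewrite negb_forall => /existsP[k hk]; exists k.
have [m nEm minm] := @find_ex_minn (fun m => ~~ Ent m) ex.
have Elt : forall i, i < m -> Ent i.
  by move=> i im; case: (boolP (Ent i)) => // h; have := minm i h; rewrite leqNgt im.
case: m nEm minm Elt => [|m1] nEm minm Elt; first by rewrite E0 in nEm.
have injg : forall i1 i2, i1 < m1.+2 -> i2 < m1.+2 -> g i1 = g i2 -> i1 = i2.
  move=> i1 i2 l1 l2 e; case: (ltngtP i1 i2) => [lt|gt|//]; exfalso.
    exact: (noRep m1.+1 i1 i2 Elt lt l2 e).
  exact: (noRep m1.+1 i2 i1 Elt gt l1 (esym e)).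
have [_ _ _ onm [onm' cm prm]] := ent_facts (Elt m1 (ltnSn m1)).
have clos : (forall c q, on_pants P (g m1.+1) c -> on_pants P q c -> [exists i : 'I_m1.+2, g i == q]) ->
   forall q, exists2 i, i < m1.+2 & g i = q.
  move=> Hm; apply: (closure2 (ltn0Sn m1.+1)) => p q c /existsP[[i hi] /= /eqP <-] hc hq.
  case: (ltngtP i m1.+1) => [lt|gt|eq]; [|by exfalso; lia|by rewrite eq in hc; exact: Hm hc hq].
  have [onL _ _ _ [_ _ pr]] := ent_facts (Elt i lt).
  case/onL: hc => ec; subst c.
  - case: i lt hi hq onL pr => [|i1] lt hi hq onL pr.
      by rewrite (c0only _ hq); apply: inS hi _.
    have [_ _ _ _ [_ _ pr1]] := ent_facts (Elt i1 (ltnW lt)).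
    by case: (pr1 q hq) => ->; [apply: inS (ltnW hi) _ | apply: inS hi _].
  - by case: (pr q hq) => ->; [apply: inS hi _ | apply: (inS (lt : i.+1 < m1.+2) erefl)].
have [sd hC] := sum_deg.
case: (classify hn2 tf (g m1.+1)) => [[a [b [ab hp]]]|[a [b [k [ab hp]]]]|[a [k [k' hp]]]].
- exfalso.
  have hba : (b == a) = false by apply/negbTE; rewrite eq_sym.
  have fmb : f m1.+1 = b.
    move: onm'; rewrite (on_perm _ hp) !inE !eqsimp orbA orbb => /orP[/eqP e|/eqP //].
    by move: cm; rewrite e (cnt_perm _ hp) /= !eq_ll eqxx hba.
  have cma : cnt (g m1.+1) a = 2.
    by rewrite (cnt_perm _ hp) /= !eq_ll eqxx hba.
  have surjg : forall q, exists2 i, i < m1.+2 & g i = q.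
    apply: clos => c q; rewrite (on_perm _ hp) !inE !eqsimp orbA orbb => /orP[/eqP->|/eqP->] hq.
      by rewrite (only2 cma hq); apply: inS (ltnSn m1.+1) _.
    by rewrite -fmb in hq; case: (prm q hq) => ->; [apply: inS (ltnW (ltnSn m1.+1)) _ | apply: inS (ltnSn m1.+1) _].
  have dg : forall p, 2 <= deg p.
    move=> p; have [i hi <-] := surjg p.
    case: (ltngtP i m1.+1) => [lt|gt|eq]; [|by exfalso; lia|by rewrite eq /deg (permP hp)].
    have [d' [x [hp' _ _]]] := entP (Elt i lt).
    by rewrite /deg (permP hp') /=; case: x {hp'}.
  have d0 : deg (g 0) = 3 by rewrite /deg (permP hA).
  have : \sum_(p : Pn) 2 + 1 <= \sum_p deg p.
    rewrite (bigD1 (g 0) (F := fun p => deg p)) // (bigD1 (g 0) (F := fun _ => 2)) //= d0.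
    apply: (@leq_trans (3 + \sum_(p | p != g 0) 2)); first by lia.
    by rewrite leq_add2l; apply: leq_sum => p _; exact: dg.
  by rewrite sd sum_nat_const (euler_char P); lia.
- exfalso.
  have tB : typeB (g m1.+1) by exists a, b, k.
  have [d' [k1 [hp1 hd1]]] := from_B tB onm'.
  by move: nEm; rewrite (EntB hp1 hd1).
have fma : f m1.+1 = a.
  by move: onm'; rewrite (on_perm _ hp) !inE !eqsimp /= orbF => /eqP.
have surjg : forall q, exists2 i, i < m1.+2 & g i = q.
  apply: clos => c q; rewrite (on_perm _ hp) !inE !eqsimp /= orbF => /eqP -> hq.
  by rewrite -fma in hq; case: (prm q hq) => ->; [apply: inS (ltnW (ltnSn m1.+1)) _ | apply: inS (ltnSn m1.+1) _].
have mn : m1.+2 = n by rewrite -(euler_char P) (inj_surj_card injg surjg).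
have surjf : forall c, exists2 i, i < n & f i = c.
  move=> c; have [p hp0] := exists_on c; have [i hi ep] := surjg p; subst p.
  case: (ltngtP i m1.+1) => [lt|gt|eq]; [|by exfalso; lia|].
    have [onL _ _ _ _] := ent_facts (Elt i lt).
    by case/onL: hp0 => ->; [exists i | exists i.+1] => //; lia.
  move: hp0; rewrite eq (on_perm _ hp) !inE !eqsimp /= orbF => /eqP ->.
  by exists m1.+1; [lia | ].
have injf := surj_inj surjf hC.
have [f1 _ _ _ _] := ent_next hA' c10 (or_introl erefl).
exists f, g; split; split.
- exact: surjf.
- exact: injf.
- by move=> q; have [i hi e] := surjg q; exists i => //; rewrite -mn.
- by move=> i1 i2 l1 l2; apply: injg; rewrite mn.
- by rewrite f1.
- move=> i h1 h2; have lt : i < m1.+1 by lia.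
  have [d [x [hpi hdi hxi]]] := entP (Elt i lt).
  have [fd _ _ _ _] := ent_next hpi hdi hxi.
  case: hxi => [ex1|[k1 ek]].
    exfalso; case: i h1 h2 lt hpi hdi fd ex1 => [//|i1] h1 h2 lt hpi hdi fd ex1.
    have [_ _ _ _ [_ cc _]] := ent_facts (Elt i1 (ltnW lt)).
    move: cc; rewrite (cnt_perm _ hpi) ex1 /= !eq_ll eqxx.
    by case: (_ == _).
  by exists k1; rewrite fd -ek.
- exists k, k'; have -> : n - 1 = m1.+1 by lia.
  by rewrite fma.
Qed.

End S.

Unset Implicit Arguments.
Theorem lemma10 (n : nat) (C Pn : finType) (P : pants_decomposition n C Pn) :
  4 <= n -> triangle_free P -> linear P \/ cyclic P.
Proof.
move=> hn tf; have hn2 : 2 <= n by lia.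
case: (boolP [exists p, [exists c, [exists d, (c != d) && perm_eq (slots P p) [:: inl c; inl c; inl d]]]])
  => [/existsP[p /existsP[c /existsP[d /andP[cd hp]]]] | noA].
  by left; exact: (@lin_case n C Pn P (p, c) hn tf d cd hp).
right.
have [sd _] := sum_deg P.
have allB : forall p, typeB P p.
  have le2 : forall p, deg P p <= 2.
    move=> p; case: (classify hn2 tf p) => [[c [d [cd hp]]] | [c [d [k [cd hp]]]] | [c [k [k' hp]]]].
    - by move: noA; rewrite negb_exists => /forallP/(_ p); rewrite negb_exists => /forallP/(_ c);
        rewrite negb_exists => /forallP/(_ d); rewrite cd hp.
    - by rewrite /deg (permP hp).
    - by rewrite /deg (permP hp).
  move=> p; case: (classify hn2 tf p) => [[c [d [cd hp]]] | // | [c [k [k' hp]]]].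
  - by move: noA; rewrite negb_exists => /forallP/(_ p); rewrite negb_exists => /forallP/(_ c);
        rewrite negb_exists => /forallP/(_ d); rewrite cd hp.
  - exfalso; have d1 : deg P p = 1 by rewrite /deg (permP hp).
    have : \sum_q deg P q < \sum_(q : Pn) 2.
      rewrite (bigD1 p (F := fun q => deg P q)) // (bigD1 p (F := fun _ => 2)) //= d1.
      have : \sum_(q | q != p) deg P q <= \sum_(q | q != p) 2 by apply: leq_sum => q _; exact: le2.
      lia.
    by rewrite sd sum_nat_const (euler_char P); lia.
have [p0 _] : exists p0 : Pn, true.
  have : 0 < #|Pn| by rewrite (euler_char P); lia.
  by case/card_gt0P => p0 _; exists p0.
have [c [d [k [cd hp]]]] := allB p0.
apply: (@cyc_case n C Pn P (p0, c) hn allB).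
by rewrite (on_perm _ hp) !inE eqxx.
Qed.
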